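(* Let $(N,+,* )$ be a planar nearring presented by $(\Phi,R,M)$. Then: (1) If $D(N)\ne\{0\}$ and every element of $D(N)$ is a zero multiplier, then $GC(N)$ equals the set of zero multipliers, which is an ideal of $N$. (2) If $D(N)$ meets at least two distinct nonzero $\Phi$-orbits and at least one element of $D(N)$ is not a zero multiplier, then $GC(N)=\{0\}$. (3) If $D(N)\setminus\{0\}$ is contained in a single $\Phi$-orbit $r\Phi$ with $r\in R\setminus M$ and $D(N)\ne\{0\}$, then $rZ(\Phi)\cup\{0\}\subseteq GC(N)\subseteq r\Phi\cup\{0\}$. (4) If $D(N)=\{0\}$, then $GC(N)=N$.
   Context: A (right) nearring $(N,+,* )$ is a set with a group $(N,+)$, a semigroup $(N,* )$, and right distributivity $(a+b)*c=a*c+b*c$. $N$ is planar if the relation $a\cong b$ ($x*a=x*b$ for all $x$) has at least $3$ classes and for all $a,b,c$ with $a\not\cong b$ the equation $x*a=x*b+c$ has a unique solution. An ideal is a normal additive subgroup $I$ with $i*n\in I$ and $n*m-n*(m+i)\in I$ for all $i\in I$, $n,m\in N$. Every planar nearring arises as follows, and we always consider it so presented. $\Phi\le \mathrm{Aut}(N,+)$ acts on the right, is fixed point free, and $n\mapsto -n+n\phi$ is bijective for each $\phi\ne\mathrm{id}$. $R$ is a set of representatives of the $\Phi$-orbits of $N\setminus\{0\}$ and $M\subseteq R$. Each $a\ne0$ is uniquely $a=r_a\phi_a$, $r_a\in R$, $\phi_a\in\Phi$. Multiplication: $a*b=0$ if $b=0$ or $r_b\in M$, else $a*b=a\phi_b$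 (and $0*b=0$). The zero multipliers are the elements of $M\Phi\cup\{0\}$, i.e. those $n$ with $x*n=0$ for all $x$. $D(N)=\{n: n*(a+b)=n*a+n*b\ \forall a,b\}$. The generalized centre is $GC(N)=\{n\in N: n*d=d*n \text{ for all } d\in D(N)\}$. $Z(\Phi)$ is the centre of $\Phi$. *)

(* Defs.v *)
Set Implicit Arguments.

Section Defs.
Variables (N : Type) (add : N -> N -> N) (zero : N) (opp : N -> N)
          (mul : N -> N -> N).

Definition is_group : Prop :=
  (forall a b c, add a (add b c) = add (add a b) c) /\
  (forall a, add zero a = a) /\ (forall a, add a zero = a) /\
  (forall a, add (opp a) a = zero) /\ (forall a, add a (opp a) = zero).

Definition is_nearring : Prop :=
  is_group /\
  (forall a b c, mul a (mul b c) = mul (mul a b) c) /\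
  (forall a b c, mul (add a b) c = add (mul a c) (mul b c)).

Definition nr_equiv (a b : N) : Prop := forall x, mul x a = mul x b.

Definition is_planar : Prop :=
  is_nearring /\
  (exists a b c, ~ nr_equiv a b /\ ~ nr_equiv a c /\ ~ nr_equiv b c) /\
  (forall a b c, ~ nr_equiv a b ->
     exists x, mul x a = add (mul x b) c /\
       forall y, mul y a = add (mul y b) c -> y = x).

Definition distr_elt (n : N) : Prop :=
  forall a b, mul n (add a b) = add (mul n a) (mul n b).

Definition gen_centre (n : N) : Prop :=
  forall d, distr_elt d -> mul n d = mul d n.

Definition zero_mult (n : N) : Prop := forall x, mul x n = zero.

Definition is_ideal (I : N -> Prop) : Prop :=
  I zero /\
  (forall i j, I i -> I j -> I (add i j)) /\
  (forall i, I i -> I (opp i)) /\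
  (forall n i, I i -> I (add (add n i) (opp n))) /\
  (forall i n, I i -> I (mul i n)) /\
  (forall n m i, I i -> I (add (mul n m) (opp (mul n (add m i))))).

(* Presentation (Phi, R, M) of the multiplication.  Phi is a set of
   functions N -> N acting on the right (n phi := phi n). *)
Definition is_presentation (Phi : (N -> N) -> Prop) (R M : N -> Prop) : Prop :=
  (forall f, Phi f -> forall a b, f (add a b) = add (f a) (f b)) /\
  Phi (fun x => x) /\
  (forall f g, Phi f -> Phi g -> Phi (fun x => g (f x))) /\
  (forall f, Phi f -> exists g, Phi g /\ (forall x, g (f x) = x) /\
                                         (forall x, f (g x) = x)) /\
  (forall f, Phi f -> (exists x, f x <> x) -> forall n, f n = n -> n = zero) /\
  (forall f, Phi f -> (exists x, f x <> x) ->
     (forall m, exists n, add (opp n) (f n) = m) /\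
     (forall n1 n2, add (opp n1) (f n1) = add (opp n2) (f n2) -> n1 = n2)) /\
  (forall r, R r -> r <> zero) /\
  (forall a, a <> zero -> exists r f, R r /\ Phi f /\ a = f r) /\
  (forall r1 r2 f, R r1 -> R r2 -> Phi f -> f r1 = r2 -> r1 = r2) /\
  (forall r, M r -> R r) /\
  (forall a, mul a zero = zero) /\
  (forall a b r f, R r -> Phi f -> b = f r ->
      (M r -> mul a b = zero) /\ (~ M r -> mul a b = f a)).

Definition centre_Phi (Phi : (N -> N) -> Prop) (z : N -> N) : Prop :=
  Phi z /\ forall f, Phi f -> forall x, f (z x) = z (f x).

End Defs.

(* Main.v *)
Require Import Defs.
From Stdlib Require Import Classical.

Theorem mainTheorem10 (N : Type) (add : N -> N -> N) (zero : N) (opp : N -> N)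
  (mul : N -> N -> N) (Phi : (N -> N) -> Prop) (R M : N -> Prop)
  (Hpl : is_planar add zero opp mul)
  (Hpres : is_presentation add zero opp mul Phi R M) :
  (* (1) *)
  ((exists d, distr_elt add mul d /\ d <> zero) ->
   (forall d, distr_elt add mul d -> zero_mult zero mul d) ->
   (forall n, gen_centre add mul n <-> zero_mult zero mul n) /\
   is_ideal add zero opp mul (zero_mult zero mul)) /\
  (* (2) *)
  ((exists d1 d2, distr_elt add mul d1 /\ distr_elt add mul d2 /\
      d1 <> zero /\ d2 <> zero /\ ~ (exists f, Phi f /\ f d1 = d2)) ->
   (exists d, distr_elt add mul d /\ ~ zero_mult zero mul d) ->
   forall n, gen_centre add mul n <-> n = zero) /\
  (* (3) *)
  (forall r, R r -> ~ M r ->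
   (forall d, distr_elt add mul d -> d <> zero -> exists f, Phi f /\ d = f r) ->
   (exists d, distr_elt add mul d /\ d <> zero) ->
   (gen_centre add mul zero /\
    (forall z, centre_Phi Phi z -> gen_centre add mul (z r))) /\
   (forall n, gen_centre add mul n -> n = zero \/ exists f, Phi f /\ n = f r)) /\
  (* (4) *)
  ((forall d, distr_elt add mul d -> d = zero) -> forall n, gen_centre add mul n).
Proof.
  destruct Hpl as [[[Hass [H0l [H0r [Hinvl Hinvr]]]] [Hmulassoc Hrdist]] _].
  destruct Hpres as [Hadd [Hid [Hcomp [Hinv [Hfpf [_ [HR0 [Horb [_ [_ [Hmul0 Hmul]]]]]]]]]]].
  assert (Hcancel : forall x, add x x = x -> x = zero).
  { intros x Hx. rewrite <- (H0l x). rewrite <- (Hinvl x) at 1.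
    rewrite <- Hass, Hx. apply Hinvl. }
  assert (Hphi0 : forall f, Phi f -> f zero = zero).
  { intros f Hf. apply Hcancel. rewrite <- Hadd by exact Hf. now rewrite H0l. }
  assert (Hinj0 : forall f x, Phi f -> f x = zero -> x = zero).
  { intros f x Hf Hx. destruct (Hinv f Hf) as [g [Hg [Hgf _]]].
    rewrite <- (Hgf x), Hx. now apply Hphi0. }
  assert (K : forall a, (forall y, mul y a = zero) \/
                        (exists f, Phi f /\ forall y, mul y a = f y)).
  { intros a. destruct (classic (a = zero)) as [Ha|Ha].
    - left; intros; subst; apply Hmul0.
    - destruct (Horb a Ha) as [r [f [Hr [Hf Haf]]]].
      destruct (classic (M r)) as [HM|HM].
      + left; intros y. exact (proj1 (Hmul y a r f Hr Hf Haf) HM).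
      + right; exists f; split; [exact Hf|]; intros y.
        exact (proj2 (Hmul y a r f Hr Hf Haf) HM). }
  assert (Hmul0l : forall b, mul zero b = zero).
  { intros b. destruct (K b) as [H|[f [Hf H]]]; rewrite H; auto. }
  assert (Hphieq : forall f g d, Phi f -> Phi g -> d <> zero -> f d = g d ->
                   forall x, f x = g x).
  { intros f g d Hf Hg Hd Hfg x.
    destruct (Hinv g Hg) as [h [Hh [Hhg Hgh]]].
    assert (Hc := Hcomp f h Hf Hh). simpl in Hc.
    destruct (classic (exists x, h (f x) <> x)) as [Ex|NEx].
    - exfalso; apply Hd. apply (Hfpf _ Hc Ex). simpl. now rewrite Hfg, Hhg.
    - assert (E : h (f x) = x).
      { apply NNPP; intro C; apply NEx; now exists x. }
      rewrite <- E at 2. now rewrite Hgh. }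
  assert (L1 : forall d a b, d <> zero -> mul d a = mul d b ->
               forall x, mul x a = mul x b).
  { intros d a b Hd Hab x.
    destruct (K a) as [Ha|[f [Hf Ha]]]; destruct (K b) as [Hb|[g [Hg Hb]]].
    - now rewrite Ha, Hb.
    - exfalso. rewrite Ha, Hb in Hab. apply Hd, (Hinj0 g); auto.
    - exfalso. rewrite Ha, Hb in Hab. apply Hd, (Hinj0 f); auto.
    - rewrite Ha, Hb in *. eapply Hphieq; eauto. }
  assert (GC0 : gen_centre add mul zero).
  { intros d _. now rewrite Hmul0, Hmul0l. }
  split; [|split; [|split]].
  -
    intros [d [Hd Hd0]] HDZ.
    assert (Zchar : forall y, mul d y = zero -> zero_mult zero mul y).
    { intros y Hy x. assert (E : mul d y = mul d zero) by now rewrite Hmul0.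
      rewrite (L1 d y zero Hd0 E x). apply Hmul0. }
    split.
    + intros n; split.
      * intros Hn. apply Zchar. rewrite <- (Hn d Hd). apply HDZ, Hd.
      * intros Hn d' Hd'. rewrite (HDZ d' Hd'), Hn. reflexivity.
    + split; [|split; [|split; [|split; [|split]]]].
      * intros x; apply Hmul0.
      * intros i j Hi Hj. apply Zchar. rewrite Hd, Hi, Hj. apply H0l.
      * intros i Hi. apply Zchar.
        assert (E : mul d (add (opp i) i) = zero) by now rewrite Hinvl, Hmul0.
        rewrite Hd, Hi, H0r in E. exact E.
      * intros n i Hi. apply Zchar.
        rewrite Hd, Hd, Hi, H0r, <- Hd, Hinvr. apply Hmul0.
      * intros i n Hi x. now rewrite Hmulassoc, Hi, Hmul0l.
      * intros n m i Hi. apply Zchar.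
        assert (E : mul n (add m i) = mul n m).
        { apply (L1 d); auto. rewrite Hd, Hi. apply H0r. }
        rewrite E, Hinvr. apply Hmul0.
  -
    intros [d1 [d2 [HD1 [HD2 [Hd1 [Hd2 Hno]]]]]] [d0 [Hd0 Hnz]] n; split; [|intros ->; exact GC0].
    intros Hn. apply NNPP; intros Hn0.
    assert (Horbit : forall d, distr_elt add mul d -> d <> zero ->
                     exists h, Phi h /\ h n = d).
    { destruct (K d0) as [H0|[f0 [Hf0 H0]]]; [exfalso; apply Hnz; exact H0|].
      destruct (K n) as [Hk|[g [Hg Hk]]].
      - exfalso. pose proof (Hn d0 Hd0) as E. rewrite H0, Hk in E.
        apply Hn0, (Hinj0 f0); auto.
      - intros d Hd Hdz. pose proof (Hn d Hd) as E. rewrite Hk in E.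
        destruct (K d) as [Hk'|[f [Hf Hk']]].
        + exfalso. rewrite Hk' in E. apply Hdz, (Hinj0 g); auto.
        + rewrite Hk' in E. destruct (Hinv g Hg) as [h [Hh [Hhg _]]].
          exists (fun x => h (f x)); split; [now apply Hcomp|].
          rewrite E. apply Hhg. }
    destruct (Horbit d1 HD1 Hd1) as [h1 [Hh1 E1]].
    destruct (Horbit d2 HD2 Hd2) as [h2 [Hh2 E2]].
    destruct (Hinv h1 Hh1) as [k [Hk [Hkh _]]].
    apply Hno. exists (fun x => h2 (k x)). split.
    + apply (Hcomp k h2 Hk Hh2).
    + now rewrite <- E1, Hkh.
  - intros r Hr HMr Hall [d [Hd Hdz]]. split; [split; [exact GC0|]|].
    + intros z [Hz Hzc] d' Hd'. destruct (classic (d' = zero)) as [->|Hd'z].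
      * now rewrite Hmul0, Hmul0l.
      * destruct (Hall d' Hd' Hd'z) as [f [Hf Ef]].
        rewrite (proj2 (Hmul (z r) d' r f Hr Hf Ef) HMr).
        rewrite (proj2 (Hmul d' (z r) r z Hr Hz eq_refl) HMr).
        rewrite Ef. apply Hzc, Hf.
    + intros n Hn. destruct (classic (n = zero)) as [|Hnz]; [now left|right].
      destruct (Hall d Hd Hdz) as [f [Hf Ef]].
      pose proof (Hn d Hd) as E.
      rewrite (proj2 (Hmul n d r f Hr Hf Ef) HMr) in E.
      destruct (K n) as [Hk|[g [Hg Hk]]].
      * exfalso. rewrite Hk in E. apply Hnz, (Hinj0 f); auto.
      * rewrite Hk in E. destruct (Hinv f Hf) as [k [Hk' [Hkf _]]].
        exists (fun x => k (g (f x))). split.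
        -- apply (Hcomp f (fun x => k (g x)) Hf). apply (Hcomp g k Hg Hk').
        -- rewrite <- Ef, <- E. now rewrite Hkf.
  - intros HD n d Hd. rewrite (HD d Hd). now rewrite Hmul0, Hmul0l.
Qed.
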